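(* Let $\mathcal{H}$ be a two-dimensional Hilbert space, let $\varepsilon\in[0,1]$, and let $\mathcal{D}_\varepsilon(\rho)=(1-\varepsilon)\rho+\varepsilon\frac{1}{2}\mathrm{tr}\rho$ be the depolarizing map on $\mathcal{L}(\mathcal{H})$. For any trace-preserving completely positive (TPCP) map $\mathcal{E}$ on $\mathcal{L}(\mathcal{H})$ there exists a TPCP map $\tilde{\mathcal{E}}$ on $\mathcal{L}(\mathcal{H})$ such that $\mathcal{D}_\varepsilon\circ\mathcal{E}=\tilde{\mathcal{E}}\circ\mathcal{D}_\varepsilon$.
   Context: $\mathcal{L}(\mathcal{H})$ denotes the set of linear operators on $\mathcal{H}$. *)

(* Defs.v *)
From HB Require Import structures.
From mathcomp Require Import all_boot all_order all_algebra.
From mathcomp Require Import complex.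
From mathcomp Require Import reals.
Set Implicit Arguments. Unset Strict Implicit. Unset Printing Implicit Defensive.
Import Order.TTheory GRing.Theory Num.Theory.
Local Open Scope ring_scope.

Section Defs.
Variable C : numClosedFieldType.

Definition adj {m n} (A : 'M[C]_(m, n)) : 'M[C]_(n, m) := map_mx Num.conj A^T.

Definition is_linear_map (E : 'M[C]_2 -> 'M[C]_2) : Prop :=
  forall (a : C) (X Y : 'M[C]_2), E (a *: X + Y) = a *: E X + E Y.

Definition trace_preserving (E : 'M[C]_2 -> 'M[C]_2) : Prop :=
  forall X : 'M[C]_2, \tr (E X) = \tr X.

(* An operator on C^n (x) C^2, written as an n x n array of 2x2 blocks
   X i j, is positive semidefinite iff <v, X v> >= 0 for every vector
   v = (v_i)_i in C^n (x) C^2. *)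
Definition block_psd (n : nat) (X : 'I_n -> 'I_n -> 'M[C]_2) : Prop :=
  forall v : 'I_n -> 'cV[C]_2,
    0 <= \sum_(i < n) \sum_(j < n) (adj (v i) *m X i j *m v j) 0 0.

(* complete positivity: id_n (x) E is positive for every n *)
Definition completely_positive (E : 'M[C]_2 -> 'M[C]_2) : Prop :=
  forall (n : nat) (X : 'I_n -> 'I_n -> 'M[C]_2),
    block_psd X -> block_psd (fun i j => E (X i j)).

Definition TPCP (E : 'M[C]_2 -> 'M[C]_2) : Prop :=
  [/\ is_linear_map E, trace_preserving E & completely_positive E].

Definition depolarizing (eps : C) (X : 'M[C]_2) : 'M[C]_2 :=
  (1 - eps) *: X + (eps * \tr X / 2) *: 1%:M.
End Defs.

(* Main.v *)
Require Import Defs.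
From HB Require Import structures.
From mathcomp Require Import all_boot all_order all_algebra.
From mathcomp Require Import complex.
From mathcomp Require Import reals.
From mathcomp Require Import ring.
Import Order.TTheory GRing.Theory Num.Theory.
Local Open Scope ring_scope.

Set Implicit Arguments. Unset Strict Implicit. Unset Printing Implicit Defensive.
Section G.
Variable C : numClosedFieldType.

Definition cj {m n} (A : 'M[C]_(m,n)) : 'M[C]_(m,n) := map_mx Num.conj A.

Lemma adjE m n (A : 'M[C]_(m,n)) i j : adj A i j = (A j i)^*.
Proof. by rewrite /adj !mxE. Qed.

Lemma adjM m n p (A : 'M[C]_(m,n)) (B : 'M[C]_(n,p)) : adj (A *m B) = adj B *m adj A.
Proof. by rewrite /adj trmx_mul map_mxM. Qed.

Lemma adjK m n (A : 'M[C]_(m,n)) : adj (adj A) = A.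
Proof. by apply/matrixP => i j; rewrite !adjE conjCK. Qed.

Lemma adj_cj m n (A : 'M[C]_(m,n)) : adj (cj A) = cj (adj A).
Proof. by apply/matrixP => i j; rewrite !mxE. Qed.

Lemma cjK m n (A : 'M[C]_(m,n)) : cj (cj A) = A.
Proof. by apply/matrixP => i j; rewrite !mxE conjCK. Qed.

Lemma cjM m n p (A : 'M[C]_(m,n)) (B : 'M[C]_(n,p)) : cj (A *m B) = cj A *m cj B.
Proof. by rewrite /cj map_mxM. Qed.

Definition bpos (F : 'M[C]_2 -> 'M[C]_2) :=
  forall n (X : 'I_n -> 'I_n -> 'M[C]_2), block_psd X -> block_psd (fun i j => F (X i j)).

Lemma bpos_cj : bpos cj.
Proof.
move=> n X H v; have := H (fun i => cj (v i)).
have -> : \sum_(i < n) \sum_(j < n) (adj (v i) *m cj (X i j) *m v j) 0 0 =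
  (\sum_(i < n) \sum_(j < n) (adj (cj (v i)) *m X i j *m cj (v j)) 0 0)^*.
  rewrite rmorph_sum; apply: eq_bigr => i _; rewrite rmorph_sum; apply: eq_bigr => j _.
  transitivity ((cj (adj (cj (v i)) *m X i j *m cj (v j))) 0 0); last by rewrite /cj mxE.
  by rewrite !cjM adj_cj !cjK.
by move=> h; rewrite conj_Creal // ger0_real.
Qed.

Lemma bpos_ad (U : 'M[C]_2) : bpos (fun A => adj U *m A *m U).
Proof.
move=> n X H v; have := H (fun i => U *m v i).
suff -> : \sum_(i < n) \sum_(j < n) (adj (v i) *m (adj U *m X i j *m U) *m v j) 0 0 =
  \sum_(i < n) \sum_(j < n) (adj (U *m v i) *m X i j *m (U *m v j)) 0 0 by [].
apply: eq_bigr => i _; apply: eq_bigr => j _.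
by rewrite adjM !mulmxA.
Qed.

Lemma bpos_comb (a b : C) F G : 0 <= a -> 0 <= b -> bpos F -> bpos G ->
  bpos (fun A => a *: F A + b *: G A).
Proof.
move=> ha hb hF hG n X H v.
have h1 := hF n X H v; have h2 := hG n X H v.
have -> : \sum_(i < n) \sum_(j < n) (adj (v i) *m (a *: F (X i j) + b *: G (X i j)) *m v j) 0 0
  = a * (\sum_(i < n) \sum_(j < n) (adj (v i) *m F (X i j) *m v j) 0 0)
  + b * (\sum_(i < n) \sum_(j < n) (adj (v i) *m G (X i j) *m v j) 0 0).
  rewrite !mulr_sumr -big_split; apply: eq_bigr => i _.
  rewrite !mulr_sumr -big_split; apply: eq_bigr => j _.
  by rewrite mulmxDr mulmxDl -!scalemxAr -!scalemxAl !mxE.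
by rewrite addr_ge0 // mulr_ge0.
Qed.


Section Lin.
Variable F : 'M[C]_2 -> 'M[C]_2.
Hypothesis hF : is_linear_map F.
Lemma lin0 : F 0 = 0.
Proof. have h := hF 1 0 0; rewrite !scale1r addr0 in h. apply: (addrI (F 0)). by rewrite addr0 -h. Qed.
Lemma linD X Y : F (X + Y) = F X + F Y.
Proof. by have := hF 1 X Y; rewrite !scale1r. Qed.
Lemma linZ a X : F (a *: X) = a *: F X.
Proof. by have := hF a X 0; rewrite !addr0 lin0 addr0. Qed.
End Lin.

Lemma adjD m n (A B : 'M[C]_(m,n)) : adj (A + B) = adj A + adj B.
Proof. by apply/matrixP => i j; rewrite !mxE rmorphD. Qed.
Lemma adjZ m n a (A : 'M[C]_(m,n)) : adj (a *: A) = a^* *: adj A.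
Proof. by apply/matrixP => i j; rewrite !mxE rmorphM. Qed.

Lemma adjZ2 a (A : 'M[C]_2) : adj (a *: A) = a^* *: adj A.
Proof. by apply/matrixP => i j; rewrite !mxE rmorphM. Qed.

Lemma adjN2 (A : 'M[C]_2) : adj (- A) = - adj A.
Proof. by apply/matrixP => i j; rewrite !mxE rmorphN. Qed.

Definition mkv (x y : C) : 'cV[C]_2 := \matrix_(k, l) (if val k == 0%N then x else y).

Lemma quad2 (A : 'M[C]_2) x y :
  (adj (mkv x y) *m A *m mkv x y) 0 0 =
  x^* * A ord0 ord0 * x + x^* * A ord0 ord_max * y + y^* * A ord_max ord0 * x
  + y^* * A ord_max ord_max * y.
Proof.
rewrite !mxE !big_ord_recr !big_ord0 /= !mxE !big_ord_recr !big_ord0 /= !mxE /=.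
have e : widen_ord (leqnSn 1) (@ord_max 0) = ord0 :> 'I_2 by apply: val_inj.
rewrite !e; ring.
Qed.


Lemma quad_real (A : 'M[C]_2) x y : 0 <= (adj (mkv x y) *m A *m mkv x y) 0 0 ->
  (x^* * A ord0 ord0 * x + x^* * A ord0 ord_max * y + y^* * A ord_max ord0 * x
  + y^* * A ord_max ord_max * y)^* = 
  x^* * A ord0 ord0 * x + x^* * A ord0 ord_max * y + y^* * A ord_max ord0 * x
  + y^* * A ord_max ord_max * y.
Proof. by rewrite quad2 => h; rewrite conj_Creal // ger0_real. Qed.

Lemma solve4 (w j a a' b b' c c' d d' : C) : w^+2 = -1 -> j = - w -> a' = a -> d' = d ->
  a'+b'+c'+d' = a+b+c+d ->
  a' + b'*j + (-j)*c' + (-j)*d'*j = a + b*w + (-w)*c + (-w)*d*w -> b' = c /\ c' = b.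
Proof.
move=> hi hj h1 h2 h3 h4; rewrite hj opprK in h4.
have z1 : a' - a = 0 by rewrite h1 subrr.
have z2 : d' - d = 0 by rewrite h2 subrr.
have z3 : (a'+b'+c'+d') - (a+b+c+d) = 0 by rewrite h3 subrr.
have z4 : (a' + b'*(-w) + w*c' + w*d'*(-w)) - (a + b*w + (-w)*c + (-w)*d*w) = 0 by rewrite h4 subrr.
have zi : w^+2 + 1 = 0 by rewrite hi addNr.
set L1 := a' - a in z1; set L2 := d' - d in z2.
set L3 := _ - _ in z3. set L4 := _ - _ in z4.
have k1 : (b' - c) *+ 2 = (L3 - L1 - L2 + w*(L4 - L1 - L2)) + (w^+2+1) * (b'-c'+b-c + w*(d'-d))
  by rewrite /L1 /L2 /L3 /L4; ring.
have k2 : (c' - b) *+ 2 = (L3 - L1 - L2 - w*(L4 - L1 - L2)) + (w^+2+1) * (c'-b'+c-b - w*(d'-d))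
  by rewrite /L1 /L2 /L3 /L4; ring.
rewrite z1 z2 z3 z4 zi !subr0 ?mulr0 ?mul0r ?addr0 ?subrr in k1 k2.
split; apply/eqP; rewrite -subr_eq0; apply/eqP.
  by move/eqP: k1; rewrite mulrn_eq0 /= => /eqP.
by move/eqP: k2; rewrite mulrn_eq0 /= => /eqP.
Qed.

Lemma herm_of_psd (A : 'M[C]_2) :
  (forall v : 'cV[C]_2, 0 <= (adj v *m A *m v) 0 0) -> adj A = A.
Proof.
move=> H.
have h1 := quad_real (H (mkv 1 0)).
have h2 := quad_real (H (mkv 0 1)).
have h3 := quad_real (H (mkv 1 1)).
have h4 := quad_real (H (mkv 1 'i)).
rewrite !rmorphD !rmorphM ?conjCK ?rmorph1 ?rmorph0 ?conjCi in h1 h2 h3 h4.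
set a := A ord0 ord0 in h1 h2 h3 h4 *.
set b := A ord0 ord_max in h1 h2 h3 h4 *.
set c := A ord_max ord0 in h1 h2 h3 h4 *.
set d := A ord_max ord_max in h1 h2 h3 h4 *.
rewrite ?rmorphN ?conjCi ?opprK ?mul1r ?mulr1 ?mul0r ?mulr0 ?addr0 ?add0r in h1 h2 h3 h4.
have [e1 e2] := solve4 (sqrCi C) (conjCi C) h1 h2 h3 h4.
apply/matrixP => i j; rewrite adjE.
have o0 (p : (0 < 2)%N) : Ordinal p = ord0 :> 'I_2 by apply: val_inj.
have o1 (p : (1 < 2)%N) : Ordinal p = ord_max :> 'I_2 by apply: val_inj.
case: i => [[|[|//]]] ?; case: j => [[|[|//]]] ?; rewrite ?o0 ?o1;
  first [exact: h1 | exact: e1 | exact: e2 | exact: h2].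
Qed.


Lemma rank1_psd (u : 'cV[C]_2) : block_psd (fun (_ _ : 'I_1) => u *m adj u).
Proof.
move=> w; rewrite !big_ord1.
rewrite -!mulmxA mulmxA.
have -> : adj u *m w ord0 = adj (adj (w ord0) *m u) by rewrite adjM adjK.
rewrite mxE big_ord1 adjE.
exact: mul_conjC_ge0.
Qed.

Lemma herm_rank1 E (hCP : completely_positive E) (u : 'cV[C]_2) :
  adj (E (u *m adj u)) = E (u *m adj u).
Proof.
apply: herm_of_psd => v.
have := hCP 1%N (fun _ _ => u *m adj u) (rank1_psd u) (fun _ => v).
by rewrite !big_ord1.
Qed.

Definition P1 := mkv 1 0 *m adj (mkv 1 0).
Definition P2 := mkv 0 1 *m adj (mkv 0 1).
Definition P3 := mkv 1 1 *m adj (mkv 1 1).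
Definition P4 := mkv 1 'i *m adj (mkv 1 'i).

Lemma via_i (a b k : C) : a - b = ('i^+2 + 1) * k -> a = b.
Proof. by rewrite sqrCi addNr mul0r => /eqP; rewrite subr_eq0 => /eqP. Qed.

Lemma decomp (X : 'M[C]_2) :
  let x00 := X ord0 ord0 in let x01 := X ord0 ord_max in
  let x10 := X ord_max ord0 in let x11 := X ord_max ord_max in
  let c3 := (x01 + x10) / 2 in let c4 := 'i * (x01 - x10) / 2 in
  X = (x00 - c3 - c4) *: P1 + (x11 - c3 - c4) *: P2 + c3 *: P3 + c4 *: P4.
Proof.
move=> x00 x01 x10 x11 c3 c4.
apply/matrixP => i j; rewrite !mxE !big_ord1 !mxE.
have o0 (p : (0 < 2)%N) : Ordinal p = ord0 :> 'I_2 by apply: val_inj.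
have o1 (p : (1 < 2)%N) : Ordinal p = ord_max :> 'I_2 by apply: val_inj.
case: i => [[|[|//]]] ?; case: j => [[|[|//]]] ?; rewrite ?o0 ?o1 /=.
all: rewrite ?rmorph1 ?rmorph0 ?conjCi /c3 /c4 /x00 /x01 /x10 /x11.
- by apply: (via_i (k := 0)); field.
- by apply: (via_i (k := (X ord0 ord_max - X ord_max ord0) / 2)); field.
- by apply: (via_i (k := - (X ord0 ord_max - X ord_max ord0) / 2)); field.
- by apply: (via_i (k := 'i * (X ord0 ord_max - X ord_max ord0) / 2)); field.
Qed.


Lemma adjP (u : 'cV[C]_2) : adj (u *m adj u) = u *m adj u :> 'M[C]_2.
Proof. by rewrite adjM adjK. Qed.

Lemma herm_E E (hL : is_linear_map E) (hCP : completely_positive E) (X : 'M[C]_2) :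
  adj (E (adj X)) = E X.
Proof.
have hX := @decomp X; cbv zeta in hX.
move: hX.
set c3 := (X ord0 ord_max + X ord_max ord0) / 2.
set c4 := 'i * (X ord0 ord_max - X ord_max ord0) / 2.
set c1 := (X ord0 ord0 - c3 - c4); set c2 := (X ord_max ord_max - c3 - c4) => hX.
have hXa : adj X = c1^* *: P1 + c2^* *: P2 + c3^* *: P3 + c4^* *: P4.
  by rewrite {1}hX !adjD !adjZ /P1 /P2 /P3 /P4 !adjP.
rewrite hXa [in RHS]hX !(linD hL) !(linZ hL) !adjD !adjZ !conjCK /P1 /P2 /P3 /P4.
by rewrite !(herm_rank1 hCP).
Qed.

Definition sg : 'M[C]_2 := \matrix_(i, j)
  (if (val i == 0%N) && (val j == 1%N) then -1 else if (val i == 1%N) && (val j == 0%N) then 1 else 0).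

Lemma sg_key (Y : 'M[C]_2) : adj sg *m cj Y *m sg = (\tr Y)^* *: 1%:M - adj Y.
Proof.
apply/matrixP => i j; rewrite /mxtrace !mxE !big_ord_recr !big_ord0 /= !mxE.
rewrite !big_ord_recr !big_ord0 /= !mxE.
have o0 (p : (0 < 2)%N) : Ordinal p = ord0 :> 'I_2 by apply: val_inj.
have o1 (p : (1 < 2)%N) : Ordinal p = ord_max :> 'I_2 by apply: val_inj.
have e : widen_ord (leqnSn 1) (@ord_max 0) = ord0 :> 'I_2 by apply: val_inj.
case: i => [[|[|//]]] ?; case: j => [[|[|//]]] ?; rewrite ?o0 ?o1 ?e /=.
all: rewrite ?rmorphN ?rmorph1 ?rmorph0 ?rmorphD.
all: ring.
Qed.


Lemma tr_adj (X : 'M[C]_2) : \tr (adj X) = (\tr X)^*.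
Proof. by rewrite /mxtrace rmorph_sum; apply: eq_bigr => i _; rewrite adjE. Qed.

Lemma adj1 : adj (1%:M : 'M[C]_2) = 1%:M.
Proof. by apply/matrixP => i j; rewrite adjE !mxE eq_sym rmorph_nat. Qed.

Section Main.
Variable E : 'M[C]_2 -> 'M[C]_2.
Hypothesis hE : TPCP E.

Definition F1 (X : 'M[C]_2) := adj sg *m cj (E (adj sg *m cj X *m sg)) *m sg.

Lemma F1_eq X : F1 X = E X + \tr X *: (1%:M - E 1%:M).
Proof.
case: hE => hL hTP hCP.
have tN (A : 'M[C]_2) : \tr (- A) = - \tr A.
  by rewrite /mxtrace -sumrN; apply: eq_bigr => i _; rewrite mxE.
rewrite /F1 !sg_key hTP mxtraceD tN mxtraceZ mxtrace1 tr_adj.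
have -> : E ((\tr X)^* *: 1%:M - adj X) = (\tr X)^* *: E 1%:M - E (adj X).
  by rewrite (linD hL) (linZ hL) -!scaleN1r (linZ hL).
rewrite adjD adjZ2 conjCK adjN2 (herm_E hL hCP) -{2}adj1 (herm_E hL hCP).
have -> : (\tr X)^* * 2 - (\tr X)^* = (\tr X)^* by ring.
rewrite conjCK; apply/matrixP => i j; rewrite !mxE; ring.
Qed.


Variable eps : C.
Definition Et X := (1 - eps / 2) *: E X + (eps / 2) *: F1 X.

Lemma Et_eq X : Et X = E X + (eps / 2 * \tr X) *: (1%:M - E 1%:M).
Proof. by rewrite /Et F1_eq; apply/matrixP => i j; rewrite !mxE; ring. Qed.

Lemma bpos_F1 : bpos F1.
Proof.
case: hE => _ _ hCP n X H.
rewrite /F1; apply: (@bpos_ad sg n (fun i j => cj (E (adj sg *m cj (X i j) *m sg)))).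
apply: (@bpos_cj n (fun i j => E (adj sg *m cj (X i j) *m sg))).
apply: (hCP _ (fun i j => adj sg *m cj (X i j) *m sg)).
apply: (@bpos_ad sg n (fun i j => cj (X i j))). exact: bpos_cj.
Qed.

Lemma Et_TPCP : 0 <= eps -> eps <= 1 -> TPCP Et.
Proof.
move=> h0 h1; case: hE => hL hTP hCP; split.
- move=> a X Y; rewrite !Et_eq (linD hL) (linZ hL) mxtraceD mxtraceZ.
  by apply/matrixP => i j; rewrite !mxE; ring.
- move=> X; rewrite Et_eq mxtraceD mxtraceZ.
  have tN (A : 'M[C]_2) : \tr (- A) = - \tr A.
    by rewrite /mxtrace -sumrN; apply: eq_bigr => i _; rewrite mxE.
  by rewrite mxtraceD tN !hTP subrr mulr0 addr0.
- have he2 : 0 <= eps / 2 by rewrite divr_ge0 // ler0n.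
  have he3 : 0 <= 1 - eps / 2.
    have -> : 1 - eps / 2 = (1 - eps) + eps / 2 by field.
    by rewrite addr_ge0 // subr_ge0.
  exact: (bpos_comb he3 he2 hCP bpos_F1).
Qed.

Lemma Et_comm X : depolarizing eps (E X) = Et (depolarizing eps X).
Proof.
case: hE => hL hTP hCP.
rewrite /depolarizing Et_eq (linD hL) !(linZ hL) hTP mxtraceD !mxtraceZ mxtrace1.
apply/matrixP => i j; rewrite !mxE. by field.
Qed.

End Main.
End G.

Unset Implicit Arguments.
Local Open Scope complex_scope.

Theorem lemma2 (R : realType) (eps : R) (heps0 : 0 <= eps) (heps1 : eps <= 1)
  (E : 'M[R[i]]_2 -> 'M[R[i]]_2) :
  TPCP E ->
  exists Et : 'M[R[i]]_2 -> 'M[R[i]]_2,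
    TPCP Et /\
    forall X : 'M[R[i]]_2,
      depolarizing eps%:C (E X) = Et (depolarizing eps%:C X).
Proof.
move=> hE; exists (Et E eps%:C); split; last exact: Et_comm.
apply: Et_TPCP => //; first by rewrite ler0c.
by have := (lecR eps 1); rewrite heps1.
Qed.
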